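(* Let $f,q\in\mathbb{R}[x_1,\dots,x_n]$ with $q\in\mathcal Q(1-x_1^2,\dots,1-x_n^2)_r$ and $r\ge\deg(f)$. Then \[ f+\|f-q\|_{1,\mathrm{cheb}}\in\mathcal Q(1-x_1^2,\dots,1-x_n^2)_{2r}. \]
   Context: $\Sigma[x]_r$ is the cone of sums of squares of polynomials in $x=(x_1,\dots,x_n)$ of total degree at most $r$; $\mathcal Q(1-x_1^2,\dots,1-x_n^2)_r=\Sigma[x]_r+\sum_{i=1}^n(1-x_i^2)\Sigma[x]_{r-2}$. $T_k(x)=\cos(k\arccos x)$ is the Chebyshev polynomial of the first kind; for $\alpha\in\mathbb{N}_0^n$, $T_\alpha(x)=\prod_iT_{\alpha_i}(x_i)$; for $p=\sum_\alpha p_\alpha T_\alpha$, $\|p\|_{1,\mathrm{cheb}}=\sum_\alpha|p_\alpha|$. *)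

(* Defs.v *)
From HB Require Import structures.
From mathcomp Require Import all_boot all_order all_algebra.
From mathcomp Require Import reals.
From mathcomp Require Import mpoly.
From Stdlib Require Import ClassicalEpsilon.
Set Implicit Arguments. Unset Strict Implicit. Unset Printing Implicit Defensive.
Import Order.TTheory GRing.Theory Num.Theory.
Local Open Scope ring_scope.

Section Defs.
Variables (R : realType) (n : nat).

(* Sigma[x]_d (d an integer, possibly negative): sums of squares of
   polynomials s with 2*deg s <= d, i.e. SOS of total degree <= d.
   For d < 0 this is {0}. *)
Definition sos_le (d : int) (p : {mpoly R[n]}) : Prop :=
  exists l : seq {mpoly R[n]},
    p = \sum_(s <- l) s ^+ 2 /\
    (forall s, s \in l -> (((msize s).-1).*2)%:Z <= d).

Definition qmodule (r : nat) (p : {mpoly R[n]}) : Prop :=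
  exists (s0 : {mpoly R[n]}) (s : 'I_n -> {mpoly R[n]}),
    sos_le r%:Z s0 /\ (forall i, sos_le (r%:Z - 2) (s i)) /\
    p = s0 + \sum_(i < n) (1 - 'X_i ^+ 2) * s i.

Fixpoint cheb_aux (i : 'I_n) (k : nat) : {mpoly R[n]} * {mpoly R[n]} :=
  (* returns (T_k(x_i), T_{k+1}(x_i)) *)
  match k with
  | 0 => (1, 'X_i)
  | k'.+1 => let: (a, b) := cheb_aux i k' in (b, 2%:R * 'X_i * b - a)
  end.
Definition chebT1 (i : 'I_n) (k : nat) : {mpoly R[n]} := (cheb_aux i k).1.

Definition chebT (a : 'X_{1..n}) : {mpoly R[n]} :=
  \prod_(i < n) chebT1 i (a i).

(* c (a finitely supported family of reals indexed by multi-indices,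
   encoded as an mpoly) gives the Chebyshev expansion of p *)
Definition is_cheb_expansion (p c : {mpoly R[n]}) : Prop :=
  p = \sum_(a <- msupp c) c@_a *: chebT a.

(* the Chebyshev coefficients p_alpha of p (the expansion is unique) *)
Definition cheb_coeffs (p : {mpoly R[n]}) : {mpoly R[n]} :=
  epsilon (inhabits 0) (is_cheb_expansion p).

Definition cheb_norm (p : {mpoly R[n]}) : R :=
  \sum_(a <- msupp (cheb_coeffs p)) `|(cheb_coeffs p)@_a|.

End Defs.

(* Main.v *)
Require Import Defs.
From HB Require Import structures.
From mathcomp Require Import all_boot all_order all_algebra.
From mathcomp Require Import reals.
From mathcomp Require Import mpoly.
From mathcomp Require Import ring lra zify.
From Stdlib Require Import ClassicalEpsilon.
Import Order.TTheory GRing.Theory Num.Theory.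
Local Open Scope ring_scope.
Set Implicit Arguments. Unset Strict Implicit. Unset Printing Implicit Defensive.

Section S.
Variables (R : realType) (n : nat).
Implicit Types (p q s : {mpoly R[n]}).

Lemma sos_le0 d : sos_le d (0 : {mpoly R[n]}).
Proof. by exists [::]; split; [rewrite big_nil|]. Qed.

Lemma sos_leD d p q : sos_le d p -> sos_le d q -> sos_le d (p + q).
Proof.
move=> [l1 [-> H1]] [l2 [-> H2]]; exists (l1 ++ l2); split; first by rewrite big_cat.
by move=> s; rewrite mem_cat => /orP[/H1|/H2].
Qed.

Lemma sos_le_mono d d' p : d <= d' -> sos_le d p -> sos_le d' p.
Proof.
move=> le [l [-> H]]; exists l; split => // s /H h; exact: le_trans h le.
Qed.

Lemma sos_le_sq d s : (s = 0 \/ (((msize s).-1.*2)%:Z <= d)) -> sos_le d (s ^+ 2).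
Proof.
case=> [->|h]; first by rewrite expr0n /=; exact: sos_le0.
by exists [:: s]; split; [rewrite big_seq1 | move=> t; rewrite inE => /eqP ->].
Qed.

Lemma sos_le_scale d c p : 0 <= c -> sos_le d p -> sos_le d (c *: p).
Proof.
move=> c0 [l [-> H]]; exists [seq Num.sqrt c *: s | s <- l]; split.
  rewrite big_map scaler_sumr; apply: eq_bigr => s _.
  by rewrite exprZn sqr_sqrtr.
move=> t /mapP [s /H h ->]; apply: le_trans h.
rewrite lez_nat; have := msizeZ_le s (Num.sqrt c).
by move=> h0; rewrite leq_double -!subn1 leq_sub2r.
Qed.

Lemma msizeM_le2 p q : (msize (p * q) <= (msize p + msize q).-1)%N.
Proof.
have [->|np] := eqVneq p 0; first by rewrite mul0r msize0.
have [->|nq] := eqVneq q 0; first by rewrite mulr0 msize0.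
by rewrite msizeM.
Qed.

Lemma sos_le_mulsq d k u p : (msize u <= k.+1)%N -> sos_le d p ->
  sos_le (d + (k.*2)%:Z) (u ^+ 2 * p).
Proof.
move=> hu [l [-> H]]; exists [seq u * s | s <- l]; split.
  rewrite big_map mulr_sumr; apply: eq_bigr => s _.
  by rewrite exprMn.
move=> t /mapP [s /H h ->].
have hs := msizeM_le2 u s.
have e : ((msize (u * s)).-1.*2 <= (msize s).-1.*2 + k.*2)%N.
  rewrite -doubleD leq_double; move: hs hu; rewrite -!subn1; lia.
apply: le_trans (_ : ((msize s).-1.*2 + k.*2)%:Z <= _).
  by rewrite lez_nat.
by rewrite PoszD lerD2r.
Qed.

Lemma sos_le_neg d p : d < 0 -> sos_le d p -> p = 0.
Proof.
move=> dn [[|s l] [-> H]]; first by rewrite big_nil.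
have := H s (mem_head _ _) => h.
by have := le_lt_trans h dn; rewrite ltz_nat.
Qed.

Lemma sos_le_msize d p (k : nat) : d <= k%:Z -> sos_le d p -> (msize p <= k.+1)%N.
Proof.
move=> dk [l [-> H]]; elim: l H => [|s l IH] H; first by rewrite big_nil msize0.
rewrite big_cons; apply: leq_trans (msizeD_le _ _) _; rewrite geq_max; apply/andP; split.
  have h := le_trans (H s (mem_head _ _)) dk; rewrite lez_nat in h.
  have := msizeM_le2 s s; rewrite -!subn1 in h * => h'; rewrite expr2; lia.
by apply: IH => t tl; apply: H; rewrite inE tl orbT.
Qed.

Lemma qmodule0 r : qmodule r (0 : {mpoly R[n]}).
Proof.
exists 0, (fun _ => 0); split; first exact: sos_le0.
split; first by move=> i; exact: sos_le0.
by rewrite add0r big1 // => i _; rewrite mulr0.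
Qed.

Lemma qmoduleD r p q : qmodule r p -> qmodule r q -> qmodule r (p + q).
Proof.
move=> [s0 [s [h0 [hs ->]]]] [t0 [t [k0 [kt ->]]]].
exists (s0 + t0), (fun i => s i + t i); split; first exact: sos_leD.
split; first by move=> i; apply: sos_leD.
rewrite -addrA [X in _ + X = _]addrCA !addrA -addrA; congr (_ + _).
by rewrite -big_split /=; apply: eq_bigr => i _; rewrite mulrDr.
Qed.

Lemma qmodule_sum r (I : eqType) (l : seq I) (F : I -> {mpoly R[n]}) :
  (forall i, i \in l -> qmodule r (F i)) -> qmodule r (\sum_(i <- l) F i).
Proof.
elim: l => [|x l IH] H; first by rewrite big_nil; exact: qmodule0.
rewrite big_cons; apply: qmoduleD; first by apply: H; rewrite mem_head.
by apply: IH => i il; apply: H; rewrite inE il orbT.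
Qed.

Lemma qmodule_scale r c p : 0 <= c -> qmodule r p -> qmodule r (c *: p).
Proof.
move=> c0 [s0 [s [h0 [hs ->]]]].
exists (c *: s0), (fun i => c *: s i); split; first exact: sos_le_scale.
split; first by move=> i; apply: sos_le_scale.
rewrite scalerDr scaler_sumr; congr (_ + _); apply: eq_bigr => i _.
by rewrite scalerAr.
Qed.

Lemma qmodule_mono r r' p : (r <= r')%N -> qmodule r p -> qmodule r' p.
Proof.
move=> le [s0 [s [h0 [hs ->]]]]; exists s0, s; split.
  by apply: sos_le_mono h0; rewrite lez_nat.
split => // i; apply: sos_le_mono (hs i); rewrite lerD2r lez_nat //.
Qed.

Lemma msize_1mX2 (i : 'I_n) : (msize (1 - 'X_i ^+ 2 : {mpoly R[n]}) <= 3)%N.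
Proof.
apply: leq_trans (msizeD_le _ _) _; rewrite msizeN mpolyXn msizeX msize1.
by rewrite mdegMn mdeg1.
Qed.

Lemma qmodule_msize r p : qmodule r p -> (msize p <= r.+1)%N.
Proof.
move=> [s0 [s [h0 [hs ->]]]].
apply: leq_trans (msizeD_le _ _) _; rewrite geq_max; apply/andP; split.
  exact: sos_le_msize h0.
apply: leq_trans (mmeasure_sum _ _ _ _) _.
apply/bigmax_leqP => i _.
case: (ltnP r 2) => hr.
  rewrite (sos_le_neg _ (hs i)) ?mulr0 ?msize0 //.
  by rewrite subr_lt0 ltz_nat.
have := sos_le_msize (k := (r - 2)%N) _ (hs i).
rewrite -subzn // lexx => /(_ isT) h.
apply: leq_trans (msizeM_le2 _ _) _.
have := msize_1mX2 i; lia.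
Qed.

Local Notation T := (chebT1 R).
Fixpoint chebV (i : 'I_n) (k : nat) : {mpoly R[n]} :=
  match k with 0 => 0 | k'.+1 => 'X_i * chebV i k' + T i k' end.

Lemma cheb_auxS (i : 'I_n) k : cheb_aux R i k.+1 =
  ((cheb_aux R i k).2, 2%:R * 'X_i * (cheb_aux R i k).2 - (cheb_aux R i k).1).
Proof. by rewrite /=; case: (cheb_aux R i k). Qed.

Lemma chebT1_0 (i : 'I_n) : T i 0 = 1. Proof. by []. Qed.
Lemma chebT1_1 (i : 'I_n) : T i 1 = 'X_i. Proof. by []. Qed.
Lemma chebT1_SS (i : 'I_n) k :
  T i k.+2 = 2%:R * 'X_i * T i k.+1 - T i k.
Proof. by rewrite /chebT1 !cheb_auxS. Qed.

Lemma chebC (i : 'I_n) k : T i k.+1 ^+ 2 =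
  1 - 'X_i ^+ 2 + 2%:R * 'X_i * T i k * T i k.+1 - T i k ^+ 2.
Proof.
elim: k => [|k IH]; first by rewrite chebT1_0 chebT1_1; ring.
rewrite chebT1_SS.
set x := 'X_i; set a := T i k; set b := T i k.+1.
apply/eqP; rewrite -subr_eq0; apply/eqP.
transitivity (b ^+ 2 - (1 - x ^+ 2 + 2%:R * x * a * b - a ^+ 2)); first by rewrite /x /a /b; ring.
by rewrite {1}IH subrr.
Qed.
Lemma algA (x a b V : {mpoly R[n]}) : (1 - x ^+ 2) * V = x * a - b ->
  (1 - x ^+ 2) * (x * V + a) = x * b - (2%:R * x * b - a).
Proof.
move=> A; apply/eqP; rewrite -subr_eq0; apply/eqP.
transitivity (x * ((1 - x ^+ 2) * V - (x * a - b))); first by ring.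
by rewrite A subrr mulr0.
Qed.

Lemma algB (x a b V : {mpoly R[n]}) :
  b ^+ 2 = 1 - x ^+ 2 + 2%:R * x * a * b - a ^+ 2 ->
  (1 - x ^+ 2) * V = x * a - b -> 1 - a ^+ 2 = (1 - x ^+ 2) * V ^+ 2 ->
  1 - b ^+ 2 = (1 - x ^+ 2) * (x * V + a) ^+ 2.
Proof.
move=> C A B; apply/eqP; rewrite -subr_eq0; apply/eqP.
transitivity (- (b ^+ 2 - (1 - x ^+ 2 + 2%:R * x * a * b - a ^+ 2))
  - x ^+ 2 * ((1 - x ^+ 2) * V ^+ 2 - (1 - a ^+ 2))
  - 2%:R * x * a * ((1 - x ^+ 2) * V - (x * a - b))); first by ring.
by rewrite -{1}C -B A !subrr; ring.
Qed.

Lemma chebA (i : 'I_n) k : (1 - 'X_i ^+ 2) * chebV i k = 'X_i * T i k - T i k.+1.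
Proof.
elim: k => [|k IH]; first by rewrite /= chebT1_0 chebT1_1 mulr0 mulr1 subrr.
by rewrite /= chebT1_SS; apply: algA.
Qed.

Lemma chebB (i : 'I_n) k : 1 - T i k ^+ 2 = (1 - 'X_i ^+ 2) * chebV i k ^+ 2.
Proof.
elim: k => [|k IH]; first by rewrite /= chebT1_0 expr1n subrr expr0n mulr0.
by rewrite /=; apply: algB => //; [apply: chebC | apply: chebA].
Qed.
Lemma mX_neq0 (i : 'I_n) : ('X_i : {mpoly R[n]}) != 0.
Proof. by rewrite -msize_poly_eq0 msizeX mdeg1. Qed.

Lemma chebT1_lead (i : 'I_n) k :
  (T i k != 0 /\ mlead (T i k) = (U_(i) *+ k)%MM) /\
  (T i k.+1 != 0 /\ mlead (T i k.+1) = (U_(i) *+ k.+1)%MM).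
Proof.
elim: k => [|k [[nz0 l0] [nz1 l1]]].
  split; split.
  - by rewrite chebT1_0 oner_neq0.
  - by rewrite chebT1_0 mlead1; apply/mnmP => j; rewrite mulmnE muln0.
  - by rewrite chebT1_1 mX_neq0.
  - by rewrite chebT1_1 mleadXm; apply/mnmP => j; rewrite mulmnE muln1.
split; first by split.
rewrite chebT1_SS.
have lP : mlead (2%:R * 'X_i * T i k.+1) = (U_(i) *+ k.+2)%MM.
  rewrite -mulrA -mpolyC_nat mul_mpolyC mleadZ ?pnatr_eq0 // mleadM ?mX_neq0 //.
  by rewrite mleadXm l1; apply/mnmP => j; rewrite mnmDE !mulmnE.
have hlt : (mlead (- T i k) < mlead (2%:R * 'X_i * T i k.+1))%O.
  rewrite mleadN l0 lP; apply: lt_mdeg_ltmc; rewrite !mdegMn mdeg1; lia.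
have e := mleadDl hlt.
split; last by rewrite e lP.
apply/eqP => h0; move: e; rewrite h0 mlead0 lP => /(congr1 mdeg).
by rewrite mdeg0 mdegMn mdeg1.
Qed.

Lemma chebT1_neq0 (i : 'I_n) k : T i k != 0.
Proof. by case: (chebT1_lead i k) => [[]]. Qed.

Lemma chebT1_mlead (i : 'I_n) k : mlead (T i k) = (U_(i) *+ k)%MM.
Proof. by case: (chebT1_lead i k) => [[]]. Qed.

Lemma chebT1_msize (i : 'I_n) k : msize (T i k) = k.+1.
Proof. by rewrite -mlead_deg ?chebT1_neq0 // chebT1_mlead mdegMn mdeg1 mul1n. Qed.

Lemma chebV_msize (i : 'I_n) k : (msize (chebV i k) <= k)%N.
Proof.
elim: k => [|k IH] /=; first by rewrite msize0.
apply: leq_trans (msizeD_le _ _) _; rewrite geq_max chebT1_msize leqnn andbT.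
apply: leq_trans (msizeM_le2 _ _) _; rewrite msizeX mdeg1.
by move: IH; rewrite -subn1; lia.
Qed.

Lemma prod_1mT2 (a : 'X_{1..n}) (r : seq 'I_n) :
  exists s : 'I_n -> {mpoly R[n]},
    (forall i, sos_le (((\sum_(j <- r) a j)%N.*2)%:Z - 2) (s i)) /\
    1 - (\prod_(j <- r) T j (a j)) ^+ 2 = \sum_(i < n) (1 - 'X_i ^+ 2) * s i.
Proof.
elim: r => [|j r [s [hs e]]].
  exists (fun _ => 0); split; first by move=> i; exact: sos_le0.
  by rewrite big_nil expr1n subrr big1 // => i _; rewrite mulr0.
set u := T j (a j); set V := chebV j (a j).
exists (fun i => u ^+ 2 * s i + (if i == j then V ^+ 2 else 0)); split.
  move=> i; rewrite big_cons; apply: sos_leD.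
    apply: sos_le_mono (sos_le_mulsq (k := a j) _ (hs i)); last by rewrite chebT1_msize.
    lia.
  case: eqP => _; last exact: sos_le0.
  apply: sos_le_sq.
  have hV := chebV_msize j (a j).
  have [/eqP|nz] := eqVneq (msize V) 0%N; first by rewrite msize_poly_eq0 => /eqP; left.
  right; have nz' : (0 < msize V)%N by rewrite lt0n.
  move: hV; rewrite -/V -subn1 => hV; lia.
transitivity ((1 - u ^+ 2) + u ^+ 2 * (1 - (\prod_(j0 <- r) T j0 (a j0)) ^+ 2)).
  by rewrite big_cons; ring.
rewrite e chebB -/V mulr_sumr.
transitivity (\sum_(i < n) (u ^+ 2 * ((1 - 'X_i ^+ 2) * s i)) +
   \sum_(i < n) (if i == j then (1 - 'X_i ^+ 2) * V ^+ 2 else 0)).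
  by rewrite -big_mkcond big_pred1_eq addrC.
rewrite -big_split /=; apply: eq_bigr => i _.
by case: eqP => [->|_]; rewrite ?addr0; ring.
Qed.
Lemma chebT_neq0 (a : 'X_{1..n}) : chebT R a != 0.
Proof. by apply/prodf_neq0 => i _; exact: chebT1_neq0. Qed.

Lemma chebT_mlead (a : 'X_{1..n}) : mlead (chebT R a) = a.
Proof.
rewrite /chebT mlead_prod; last by move=> i _ _; exact: chebT1_neq0.
rewrite [RHS]multinomUE_id; apply: eq_bigr => i _; exact: chebT1_mlead.
Qed.

Lemma chebT_msize (a : 'X_{1..n}) : msize (chebT R a) = (mdeg a).+1.
Proof. by rewrite -mlead_deg ?chebT_neq0 // chebT_mlead. Qed.

Lemma one_pm_T (v : {mpoly R[n]}) (a : 'X_{1..n}) (D : nat) : (mdeg a <= D)%N ->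
  v ^+ 2 = chebT R a ^+ 2 -> (msize v <= (mdeg a).+1)%N ->
  qmodule (2 * D) (1 + v).
Proof.
move=> hD hv hs.
have [s [hs' e]] := prod_1mT2 a (index_enum 'I_n).
exists (2^-1 *: (1 + v) ^+ 2), (fun i => 2^-1 *: s i); split.
  apply: sos_le_scale; first by rewrite invr_ge0 ler0n.
  apply: sos_le_sq; right.
  have h1 : (msize (1 + v) <= (mdeg a).+1)%N.
    apply: leq_trans (msizeD_le _ _) _; rewrite geq_max msize1 hs andbT //.
  rewrite lez_nat; move: h1 hD; rewrite -subn1; lia.
split.
  move=> i; apply: sos_le_scale; first by rewrite invr_ge0 ler0n.
  apply: sos_le_mono (hs' i); rewrite -mdegE; lia.
have E : \sum_(i < n) (1 - 'X_i ^+ 2) * (2^-1 *: s i) = 2^-1 *: (1 - v ^+ 2).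
  rewrite hv /chebT e scaler_sumr; apply: eq_bigr => i _; by rewrite scalerAr.
rewrite E -scalerDr.
have -> : (1 + v) ^+ 2 + (1 - v ^+ 2) = 2%:R * (1 + v) by ring.
by rewrite mulr_natl -scaler_nat scalerA mulVf ?pnatr_eq0 // scale1r.
Qed.

Lemma coef_term (c : R) (a : 'X_{1..n}) (D : nat) : (mdeg a <= D)%N ->
  qmodule (2 * D) (`|c|%:MP + c *: chebT R a).
Proof.
move=> hD; have [c0|c0] := leP 0 c.
  rewrite ger0_norm // -alg_mpolyC -scalerDr; apply: qmodule_scale => //.
  by apply: one_pm_T hD _ _; rewrite // chebT_msize.
rewrite ltr0_norm // -alg_mpolyC.
have -> : (- c)%:A + c *: chebT R a = (- c) *: (1 + - chebT R a).
  by rewrite scalerDr scalerN [- c *: chebT R a]scaleNr opprK.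
apply: qmodule_scale; first by rewrite oppr_ge0 ltW.
by apply: one_pm_T hD _ _; rewrite ?sqrrN // msizeN chebT_msize.
Qed.
Definition Lc (c : {mpoly R[n]}) := \sum_(a <- msupp c) c@_a *: chebT R a.

Lemma Lc_sub c (s : seq 'X_{1..n}) : uniq s -> {subset msupp c <= s} ->
  Lc c = \sum_(a <- s) c@_a *: chebT R a.
Proof.
move=> us sub; rewrite /Lc [RHS](bigID (mem (msupp c))) /=.
rewrite [X in _ = _ + X]big1 ?addr0; last first.
  by move=> a /memN_msupp_eq0 ->; rewrite scale0r.
rewrite -[in RHS]big_filter; apply: perm_big; apply: uniq_perm.

- exact: msupp_uniq.
- exact: filter_uniq.
move=> x; rewrite mem_filter; case xc: (x \in msupp c) => //=.
by rewrite (sub _ xc).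
Qed.

Lemma LcD c1 c2 : Lc (c1 + c2) = Lc c1 + Lc c2.
Proof.
set s := undup (msupp c1 ++ msupp c2).
have us : uniq s by exact: undup_uniq.
rewrite !(Lc_sub (s := s)) //.
- by rewrite -big_split /=; apply: eq_bigr => a _; rewrite mcoeffD scalerDl.
- by move=> x xc; rewrite mem_undup mem_cat xc orbT.
- by move=> x xc; rewrite mem_undup mem_cat xc.
- by move=> x /msuppD_le; rewrite mem_undup.
Qed.

Lemma Lc0 : Lc 0 = 0.
Proof. by rewrite /Lc msupp0 big_nil. Qed.

Lemma LcX (l : R) a : Lc (l *: 'X_[a]) = l *: chebT R a.
Proof.
have [->|nz] := eqVneq l 0; first by rewrite !scale0r Lc0.
by rewrite /Lc msuppMCX // big_seq1 mcoeffZ mcoeffX eqxx mulr1.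
Qed.

Lemma Lc_exists p : exists c, p = Lc c.
Proof.
elim/mleadrect: p => p IH.
have [->|nzp] := eqVneq p 0; first by exists 0; rewrite Lc0.
set a := mlead p.
set l := p@_a / (chebT R a)@_a.
have nzT : (chebT R a)@_a != 0.
  by rewrite -{1}(chebT_mlead a) mleadc_eq0 chebT_neq0.
set q := p - l *: chebT R a.
have [q0|nzq] := eqVneq q 0.
  exists (l *: 'X_[a]); rewrite LcX; apply/eqP; rewrite -subr_eq0; exact/eqP.
have qa : q@_a = 0.
  by rewrite /q mcoeffB mcoeffZ /l divfK // subrr.
have ltq : (mlead q < mlead p)%O.
  have le1 : (mlead q <= a)%O.
    apply: le_trans (mleadB_le _ _) _.
    by rewrite leUx lexx /= (le_trans (mleadZ_le _ _)) // chebT_mlead.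
  rewrite lt_neqAle le1 andbT; apply/eqP => e.
  by move: (mleadc_eq0 q); rewrite e qa eqxx (negbTE nzq).
have [c' ec'] := IH q ltq.
exists (c' + l *: 'X_[a]); rewrite LcD LcX -ec' /q subrK //.
Qed.

Lemma Lc_deg c a : a \in msupp c -> (mdeg a < msize (Lc c))%N.
Proof.
move=> ac.
have nzc : c != 0 by apply/eqP => c0; move: ac; rewrite c0 msupp0.
set a0 := mlead c.
have a0c : a0 \in msupp c by exact: mlead_supp.
have le : (mdeg a <= mdeg a0)%N by apply: lemc_mdeg; exact: msupp_le_mlead.
apply: leq_ltn_trans le _; apply: msize_mdeg_lt.
rewrite mcoeff_msupp /Lc raddf_sum /= (bigD1_seq a0) ?msupp_uniq //=.
rewrite big_seq_cond big1 ?addr0.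
  rewrite mcoeffZ mulf_neq0 //; first by rewrite -mcoeff_msupp.
  by rewrite -{1}(chebT_mlead a0) mleadc_eq0 chebT_neq0.
move=> b /andP [bc nb]; rewrite mcoeffZ [(chebT R b)@_a0]mcoeff_gt_mlead ?mulr0 // chebT_mlead.

by rewrite lt_neqAle nb msupp_le_mlead.
Qed.
End S.

Theorem theorem4 (R : realType) (n : nat) (f q : {mpoly R[n]}) (r : nat) :
  qmodule r q -> (msize f <= r.+1)%N ->
  qmodule (2 * r) (f + (cheb_norm (f - q))%:MP).
Proof.
move=> hq hf.
set g := f - q.
have ec : g = Lc (cheb_coeffs g).
  have := @epsilon_spec _ (inhabits 0) (is_cheb_expansion g) (Lc_exists g).
  by [].
set c := cheb_coeffs g in ec *.
have hg : (msize g <= r.+1)%N.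
  apply: leq_trans (msizeD_le _ _) _; rewrite msizeN geq_max hf.
  exact: qmodule_msize hq.
have deg : forall a, a \in msupp c -> (mdeg a <= r)%N.
  by move=> a ac; have := Lc_deg ac; rewrite -ec; lia.
have -> : f + (cheb_norm g)%:MP =
    q + \sum_(a <- msupp c) (`|c@_a|%:MP + c@_a *: chebT R a).
  rewrite big_split /= -/(Lc c) -ec /cheb_norm -/c raddf_sum /=.
  by rewrite /g; set S := \sum_(i <- msupp c) _; ring.
apply: qmoduleD.
  by apply: qmodule_mono hq; lia.
apply: qmodule_sum => a ac; exact: coef_term (deg a ac).
Qed.
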